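(* For every integer $n \geq 1$, the number of three-candidate ballot sequences of length $n$ with matching parity equals the $n$-th Riordan number $R(n)$.
   Context: A three-candidate ballot sequence of length $n$ is a word $b_1\cdots b_n$ with $b_i\in\{A,B,C\}$ such that in every prefix $b_1\cdots b_k$ ($1\le k\le n$) the number of $A$'s is at least the number of $B$'s, which is at least the number of $C$'s. It has matching parity if the numbers of $A$'s, $B$'s and $C$'s in the whole word are all congruent modulo $2$. $R(n)$ is the number of Riordan paths of length $n$: lattice paths from $(0,0)$ to $(n,0)$ with steps $U=(1,1)$, $F=(1,0)$, $D=(1,-1)$ that never go below the $x$-axis and have no flat step $F$ on the $x$-axis. *)

(* Defs.v *)
From HB Require Import structures.
From mathcomp Require Import all_boot.
Set Implicit Arguments. Unset Strict Implicit. Unset Printing Implicit Defensive.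

Inductive cand := cA | cB | cC.
Definition cand_eqb (x y : cand) : bool :=
  match x, y with cA, cA | cB, cB | cC, cC => true | _, _ => false end.
Lemma cand_eqP : Equality.axiom cand_eqb.
Proof. by case; case; constructor. Qed.
HB.instance Definition _ := hasDecEq.Build cand cand_eqP.
Definition cand_nat (c : cand) : nat := match c with cA => 0 | cB => 1 | cC => 2 end.
Definition nat_cand (n : nat) : cand := match n with 0 => cA | 1 => cB | _ => cC end.
Lemma cand_natK : cancel cand_nat nat_cand. Proof. by case. Qed.
HB.instance Definition _ := Countable.copy cand (can_type cand_natK).
Lemma cand_enumP : Finite.axiom [:: cA; cB; cC]. Proof. by case. Qed.
HB.instance Definition _ := isFinite.Build cand cand_enumP.

Definition pcount {T : eqType} (x : T) (k : nat) (s : seq T) : nat :=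
  count_mem x (take k s).

Definition ballot (s : seq cand) : bool :=
  [forall k : 'I_(size s).+1,
     (pcount cB k s <= pcount cA k s) && (pcount cC k s <= pcount cB k s)].

Definition matching_parity (s : seq cand) : bool :=
  (odd (count_mem cA s) == odd (count_mem cB s)) &&
  (odd (count_mem cB s) == odd (count_mem cC s)).

Definition num_ballot_matching (n : nat) : nat :=
  #|[set w : n.-tuple cand | ballot w && matching_parity w]|.

(* Riordan paths: steps U=(1,1), F=(1,0), D=(1,-1) *)
Inductive step := sU | sF | sD.
Definition step_eqb (x y : step) : bool :=
  match x, y with sU, sU | sF, sF | sD, sD => true | _, _ => false end.
Lemma step_eqP : Equality.axiom step_eqb.
Proof. by case; case; constructor. Qed.
HB.instance Definition _ := hasDecEq.Build step step_eqP.
Definition step_nat (c : step) : nat := match c with sU => 0 | sF => 1 | sD => 2 end.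
Definition nat_step (n : nat) : step := match n with 0 => sU | 1 => sF | _ => sD end.
Lemma step_natK : cancel step_nat nat_step. Proof. by case. Qed.
HB.instance Definition _ := Countable.copy step (can_type step_natK).
Lemma step_enumP : Finite.axiom [:: sU; sF; sD]. Proof. by case. Qed.
HB.instance Definition _ := isFinite.Build step step_enumP.

(* height after the first k steps, as an integer-valued quantity
   #U - #D (we keep it as a pair of nats and compare). *)
(* never below the x-axis: in every prefix #D <= #U;
   ends at height 0: #U = #D overall;
   no flat step on the x-axis: whenever step k+1 is F, the height
   after the first k steps (#U - #D in the prefix) is positive. *)
Definition riordan_path (s : seq step) : bool :=
  [&& [forall k : 'I_(size s).+1, pcount sD k s <= pcount sU k s],
      count_mem sU s == count_mem sD s &
      [forall k : 'I_(size s),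
         (nth sU s k == sF) ==> (pcount sD k s < pcount sU k s)]].

Definition R (n : nat) : nat :=
  #|[set p : n.-tuple step | riordan_path p]|.

(* Main.v *)
Require Import Defs.
From mathcomp Require Import zify.
From mathcomp Require Import all_boot.
Set Implicit Arguments. Unset Strict Implicit. Unset Printing Implicit Defensive.

Lemma test (a b h : nat) : ((a <= h) && (h <= b) : nat) <= 1.
Proof. lia. Qed.

Fixpoint E (M h : nat) : nat :=
  match M with 0 => (h == 0) : nat | 1 => (h == 1) : nat
  | M'.+2 => E M' h + (h == M'.+2) end.

Lemma E_big M h : M < h -> E M h = 0.
Proof.
elim/ltn_ind: M => -[|[|M]] IH /= lt.
- by rewrite gtn_eqF.
- by rewrite gtn_eqF.
- rewrite IH ?(ltnW (ltnW lt)) //. by rewrite (gtn_eqF lt).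
Qed.

Lemma E_sum M h : E M h + E M.+1 h = (h <= M.+1).
Proof.
elim: M h => [|M IH] h /=.
- by case: h => [|[|h]].
- change (E M.+2 h) with (E M h + (h == M.+2)).
  rewrite addnA [E M.+1 h + _]addnC IH. rewrite [h <= M.+2]leq_eqVlt ltnS.
  by case: eqP => [->|_]; rewrite ?ltnn ?addn0.
Qed.

Lemma E0 M : E M 0 = ~~ odd M.
Proof. by elim/ltn_ind: M => -[|[|M]] IH //=; rewrite IH // addn0 negbK. Qed.

Lemma E_SS M h : E M.+2 h = E M h + (h == M.+2). Proof. by []. Qed.
Arguments E : simpl never.

Ltac bcase := repeat (match goal with
  | |- context [(?a <= ?b)%N] => case: (leqP a b) => ?
  | |- context [(?a == ?b :> nat)] => case: (@eqP _ a b) => ?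
  end; rewrite /=).
Ltac blia := bcase; lia.

Definition A (x y h : nat) : nat := \sum_(i < h.+1) E x i * E y (h - i).

Lemma sum_ind (n j : nat) (F : nat -> nat) :
  \sum_(i < n) (nat_of_ord i == j) * F i = (j < n) * F j.
Proof.
case: (ltnP j n) => [lt|ge].
- rewrite (bigD1 (Ordinal lt)) //= eqxx mul1n big1 ?addn0 ?mul1n // => i /eqP ne.
  have -> : (nat_of_ord i == j) = false.
    by apply/negbTE/eqP=> e; apply: ne; apply: val_inj.
  by [].
- rewrite big1 // => i _.
  have -> : (nat_of_ord i == j) = false.
    by apply/negbTE/eqP=> e; move: (ltn_ord i); rewrite e ltnNge ge.
  by [].
Qed.

Lemma A_rec x y h : A x.+2 y h = A x y h + (x.+2 <= h) * E y (h - x.+2).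
Proof.
have := sum_ind h.+1 x.+2 (fun i => E y (h - i)); rewrite ltnS => <-.
rewrite /A -big_split /=; apply: eq_bigr => i _.
by rewrite mulnDl.
Qed.

Lemma A0 y h : A 0 y h = E y h.
Proof.
by rewrite /A big_ord_recl /= subn0 mul1n big1 ?addn0.
Qed.

Lemma A1 y h : A 1 y h = (1 <= h) * E y (h - 1).
Proof.
rewrite /A.
have := sum_ind h.+1 1 (fun i => E y (h - i)). rewrite ltnS => <-.
by apply: eq_bigr => i _.
Qed.

Lemma A_sym x y h : A x y h = A y x h.
Proof.
rewrite /A (reindex_inj rev_ord_inj) /=; apply: eq_bigr => i _.
rewrite subSS mulnC; congr (_ * E _ _).
by rewrite subKn // -ltnS.
Qed.

Definition B (x y h : nat) : nat :=
  match y, h with y'.+1, h'.+1 => (if x is x'.+1 then A x' y' h' else 0) | _, _ => 0 end.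
Definition c (x y h : nat) : nat := A x y h + B x y h.
Definition I (a b h : nat) : nat := (a <= h) && (h <= b).

Lemma E_le0 k : E 0 k = (k <= 0).
Proof. by case: k. Qed.




Lemma c_recx x y h : c x.+2 y h = c x y h + I x.+2 (x.+2 + y) h.
Proof.
rewrite /c /B A_rec /I.
case: y => [|y]; case: h => [|h].
- by rewrite !addn0.
- rewrite !addn0 E_le0; case: leqP => hx /=; rewrite ?mul0n ?mul1n; blia.
- by rewrite !addn0.
- case: x => [|x].
  + rewrite A1 subSS subn1 ltnS.
    have := E_sum y h.-1.
    case: leqP => hx /=; rewrite ?mul0n ?mul1n; blia.
  + rewrite (A_rec x y h) !subSS ltnS.
    have := E_sum y (h - x.+2).
    case: leqP => hx /=; rewrite ?mul0n ?mul1n; blia.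
Qed.

Lemma B_sym x y h : B x y h = B y x h.
Proof. by case: x => [|x]; case: y => [|y]; case: h => [|h] //=; rewrite A_sym. Qed.

Lemma c_sym x y h : c x y h = c y x h.
Proof. by rewrite /c A_sym B_sym. Qed.

Lemma c_recy x y h : c x y.+2 h = c x y h + I y.+2 (x + y.+2) h.
Proof. by rewrite c_sym c_recx c_sym [y.+2 + x]addnC. Qed.

Lemma A_zero x y h : x + y < h -> A x y h = 0.
Proof.
move=> lt; rewrite /A big1 // => i _.
case: (leqP i x) => ix.
- by rewrite (@E_big y) ?muln0 //; lia.
- by rewrite E_big.
Qed.

Lemma c_zero x y h : x + y < h -> c x y h = 0.
Proof.
move=> lt; rewrite /c A_zero // /B.
case: y lt => [|y]; case: h => [|h] //; case: x => [|x] // lt.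
rewrite A_zero //; lia.
Qed.

Lemma c0 x y : c x y 0 = ~~ odd x && ~~ odd y.
Proof.
rewrite /c /B /A big_ord_recl big_ord0 /= !E0 addn0.
by case: y => [|y]; rewrite addn0; case: (odd x); case: (odd _).
Qed.

Definition Dc x y h := (if h is h'.+1 then c x y h' + c x y h else 0) + c x y h.+1.
Definition Tc x y h := c x.+1 y h + (if x is x'.+1 then c x' y.+1 h else 0)
  + (if y is y'.+1 then c x y' h else 0).

Lemma c0y y h : c 0 y h = E y h.
Proof. by rewrite /c A0 /B; case: y => [|y]; case: h => [|h]; rewrite addn0. Qed.

Lemma c1y y h : c 1 y h = I 1 y.+1 h.
Proof.
rewrite /c A1 /B /I; case: y => [|y]; case: h => [|h] //=.
- by rewrite mul1n subn1 /= addn0 E_le0; case: h.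
- rewrite mul1n subn1 /= A0 addnC E_sum. by [].
Qed.

Lemma E1 h : E 1 h = (h == 1). Proof. by []. Qed.
Lemma E0' h : E 0 h = (h == 0). Proof. by []. Qed.

Lemma Id_small x y h : x <= 2 -> y <= 2 -> Tc x y h = Dc x y h.
Proof.
move=> hx hy; rewrite /Tc /Dc.
case: x hx => [|[|[|x]]] // _; case: y hy => [|[|[|y]]] // _;
  case: h => [|h];
  rewrite ?(c_recx 0) ?(c_recx 1) ?c0y ?c1y ?E_SS ?E1 ?E0' /I;
  do 6? case: h => [|h]; simpl; lia.
Qed.

Lemma Id_x_small x y h : x <= 2 -> Tc x y h = Dc x y h.
Proof.
move=> hx; elim/ltn_ind: y h => y IH h.
case: (leqP y 2) => hy; first exact: Id_small.
case: y hy IH => [|[|[|y]]] // _ IH.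
have := IH y.+1 (ltnW (ltnSn _)) h; clear IH.
rewrite /Tc /Dc.
case: x hx => [|x] hx; case: h => [|h].
- rewrite (c_recy 0 y) ?(c_recy _ y.+1) /I => IH'; blia.
- rewrite (c_recy 0 y) ?(c_recy _ y.+1) /I => IH'; blia.
- rewrite (c_recy x y.+2) (c_recy x.+1 y) ?(c_recy _ y.+1) /I => IH'; blia.
- rewrite (c_recy x y.+2) (c_recy x.+1 y) ?(c_recy _ y.+1) /I => IH'; blia.
Qed.

Lemma Id x y h : Tc x y h = Dc x y h.
Proof.
elim/ltn_ind: x y h => x IH y h.
case: (leqP x 2) => hx; first exact: Id_x_small.
case: x hx IH => [|[|[|x]]] // _ IH.
have := IH x.+1 (ltnW (ltnSn _)) y h; clear IH.
rewrite /Tc /Dc.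
case: y => [|y]; case: h => [|h].
- rewrite (c_recx x 1) (c_recx x.+2 0) ?(c_recx x.+1) /I => IH'; blia.
- rewrite (c_recx x 1) (c_recx x.+2 0) ?(c_recx x.+1) /I => IH'; blia.
- rewrite (c_recx x y.+2) (c_recx x.+2 y.+1) ?(c_recx x.+1) /I => IH'; blia.
- rewrite (c_recx x y.+2) (c_recx x.+2 y.+1) ?(c_recx x.+1) /I => IH'; blia.
Qed.

Definition Lam (f : nat -> nat) x y := \sum_(h < x + y + 1) c x y h * f h.
Definition Tg (g : nat -> nat -> nat) x y :=
  g x.+1 y + (if x is x'.+1 then g x' y.+1 else 0) + (if y is y'.+1 then g x y' else 0).
Definition TRf (f : nat -> nat) h := f h.+1 + (if h is h'.+1 then f h' + f h else 0).

Lemma Lam_widen f x y N : x + y < N -> Lam f x y = \sum_(h < N) c x y h * f h.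
Proof.
move=> lt; rewrite /Lam (big_ord_widen N (fun h => c x y h * f h)) ?addn1 //.
rewrite big_mkcond; apply: eq_bigr => i _; case: ifP => // /negbT.
by rewrite -leqNgt => le; rewrite c_zero.
Qed.

Definition Dv (v : nat -> nat) h := (if h is h'.+1 then v h' + v h else 0) + v h.+1.

Lemma adjoint (v f : nat -> nat) N :
  \sum_(h < N.+1) Dv v h * f h + v N * f N.+1
  = \sum_(h < N.+1) v h * TRf f h + v N.+1 * f N.
Proof.
elim: N => [|N IH].
- rewrite !big_ord_recr !big_ord0 /= /TRf /Dv /=. lia.
- rewrite big_ord_recr [in RHS]big_ord_recr /= [Dv v N.+1]/Dv [TRf f N.+1]/TRf.
  rewrite !mulnDl !mulnDr.
  move: IH; set L := \sum_(i < N.+1) _; set R := \sum_(i < N.+1) _. lia.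
Qed.

Lemma intertwine f x y : Tg (Lam f) x y = Lam (TRf f) x y.
Proof.
have H := adjoint (c x y) f (x + y + 1).
rewrite (@c_zero x y (x + y + 1)) ?(@c_zero x y (x + y + 1).+1) ?mul0n ?addn0 in H; try lia.
rewrite (@Lam_widen (TRf f) x y (x + y + 1).+1); last lia.
rewrite -H.
have -> : \sum_(h < (x + y + 1).+1) Dv (c x y) h * f h
  = \sum_(h < (x + y + 1).+1) Tc x y h * f h.
  by apply: eq_bigr => h _; rewrite Id /Dc.
rewrite /Tg /Tc; clear H.
rewrite (@Lam_widen f x.+1 y (x + y + 1).+1); last lia.
case: x => [|x]; case: y => [|y].
- rewrite !addn0; apply: eq_bigr => h _; rewrite !mulnDl; lia.
- rewrite (@Lam_widen f 0 y (0 + y.+1 + 1).+1); last lia.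
  rewrite addn0 -big_split /=; apply: eq_bigr => h _; rewrite !mulnDl; lia.
- rewrite [_ + Lam f x 1 + 0]addn0 (@Lam_widen f x 1 (x.+1 + 0 + 1).+1); last lia.
  rewrite -big_split /=; apply: eq_bigr => h _; rewrite !mulnDl; lia.
- rewrite (@Lam_widen f x y.+2 (x.+1 + y.+1 + 1).+1); last lia.
  rewrite (@Lam_widen f x.+1 y (x.+1 + y.+1 + 1).+1); last lia.
  rewrite -!big_split /=; apply: eq_bigr => h _; rewrite !mulnDl //.
Qed.



Lemma sum_cons (T : finType) n (F : seq T -> nat) :
  \sum_(t : n.+1.-tuple T) F t = \sum_(a : T) \sum_(t : n.-tuple T) F (a :: t).
Proof.
rewrite (partition_big (@thead _ _) xpredT) //=; apply: eq_bigr => a _.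
rewrite (reindex (fun t : n.-tuple T => [tuple of a :: t])) /=; last first.
  pose ttail (t : n.+1.-tuple T) := [tuple of behead t].
  exists ttail => [t _ | t /eqP <-]; first exact: val_inj.
  by rewrite -tuple_eta.
by apply: eq_bigl => t; rewrite theadE eqxx.
Qed.

Lemma sum_tuple0 (T : finType) (F : seq T -> nat) :
  \sum_(t : 0.-tuple T) F t = F [::].
Proof.
rewrite (eq_bigr (fun _ => F [::])); last by move=> t _; rewrite tuple0.
by rewrite sum_nat_const card_tuple expn0 ?mul1n.
Qed.

Lemma sum_rcons (T : finType) n (F : seq T -> nat) :
  \sum_(t : n.+1.-tuple T) F t = \sum_(t : n.-tuple T) \sum_(a : T) F (rcons t a).
Proof.
elim: n F => [|n IH] F.
  rewrite sum_cons (sum_tuple0 (fun t => \sum_(a : T) F (rcons t a))).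
  by apply: eq_bigr => a _; rewrite (sum_tuple0 (fun t => F (a :: t))).
rewrite sum_cons (sum_cons _ (fun t => \sum_(a : T) F (rcons t a))).
by apply: eq_bigr => a _; rewrite (IH (fun t => F (a :: t))).
Qed.

Lemma sum_cand (H : cand -> nat) : \sum_(a : cand) H a = H cA + H cB + H cC.
Proof.
rewrite (bigD1 cA) //= (bigD1 cB) //= (bigD1 cC) //= big_pred0 ?addn0 ?addnA //.
by case.
Qed.

Lemma sum_step (H : step -> nat) : \sum_(a : step) H a = H sU + H sF + H sD.
Proof.
rewrite (bigD1 sU) //= (bigD1 sF) //= (bigD1 sD) //= big_pred0 ?addn0 ?addnA //.
by case.
Qed.

Lemma forall_iota n (P : nat -> bool) :
  [forall k : 'I_n, P k] = all P (iota 0 n).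
Proof.
apply/forallP/allP => H.
- move=> k; rewrite mem_iota add0n => /andP[_ lt]; exact: (H (Ordinal lt)).
- by move=> k; apply: H; rewrite mem_iota add0n ltn_ord.
Qed.

Lemma forall_take_rcons (T : eqType) (Q : seq T -> bool) s a :
  [forall k : 'I_(size (rcons s a)).+1, Q (take k (rcons s a))] =
  [forall k : 'I_(size s).+1, Q (take k s)] && Q (rcons s a).
Proof.
rewrite !(forall_iota _ (fun k => Q (take k _))) size_rcons -addn1 iotaD all_cat.
have -> : iota (0 + (size s).+1) 1 = [:: (size s).+1] by [].
rewrite [all _ [:: _]]/= [take (size s).+1 _]take_oversize ?size_rcons // andbT.
congr (_ && _).
apply: eq_in_all => k; rewrite mem_iota add0n ltnS => /andP[_ le].
by rewrite -cats1 takel_cat.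
Qed.

Definition Qb (t : seq cand) :=
  (count_mem cB t <= count_mem cA t) && (count_mem cC t <= count_mem cB t).

Lemma ballotE s : ballot s = [forall k : 'I_(size s).+1, Qb (take k s)].
Proof. by []. Qed.

Lemma ballot_rcons s a : ballot (rcons s a) = ballot s && Qb (rcons s a).
Proof. by rewrite !ballotE forall_take_rcons. Qed.

Lemma ballot_Q s : ballot s -> Qb s.
Proof. by rewrite ballotE => /forallP /(_ ord_max) /=; rewrite take_size. Qed.

Lemma count_rcons' (T : eqType) (s : seq T) a x :
  count_mem x (rcons s a) = count_mem x s + (a == x).
Proof. by rewrite -cats1 count_cat /= addn0. Qed.

Definition st1 (s : seq cand) := count_mem cA s - count_mem cB s.
Definition st2 (s : seq cand) := count_mem cB s - count_mem cC s.
Definition Fs n (g : nat -> nat -> nat) :=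
  \sum_(w : n.-tuple cand) ballot w * g (st1 w) (st2 w).

Lemma Fs_step n g : Fs n.+1 g = Fs n (Tg g).
Proof.
rewrite /Fs (sum_rcons _ (fun s => ballot s * g (st1 s) (st2 s))); apply: eq_bigr => w _.
rewrite sum_cand !ballot_rcons.
case Hb: (ballot w); last by rewrite !andFb !mul0n.
rewrite !andTb; change (nat_of_bool true) with 1; rewrite ?mul1n.
have e1 : (cA == cB) = false by [].
have e2 : (cA == cC) = false by [].
have e3 : (cB == cA) = false by [].
have e4 : (cB == cC) = false by [].
have e5 : (cC == cA) = false by [].
have e6 : (cC == cB) = false by [].
have := ballot_Q Hb; rewrite /Qb /st1 /st2 /Tg !count_rcons' !eqxx e1 e2 e3 e4 e5 e6.
change (nat_of_bool true) with 1; change (nat_of_bool false) with 0; rewrite !addn0.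
set a := count_mem cA w; set b := count_mem cB w; set c := count_mem cC w.
move=> /andP[ba cb].
have -> : (b <= a + 1) = true by lia.
have -> : (c <= b + 1) = true by lia.
rewrite ba cb /=.
have -> : a + 1 - b = (a - b).+1 by lia.
have -> : b + 1 - c = (b - c).+1 by lia.
have -> : a - (b + 1) = (a - b).-1 by lia.
have -> : b - (c + 1) = (b - c).-1 by lia.
have -> : (b + 1 <= a) = (0 < a - b) by lia.
have -> : (c + 1 <= b) = (0 < b - c) by lia.
case: (a - b) => [|x]; case: (b - c) => [|y] /=; rewrite ?mul0n ?mul1n ?addn0 //.
Qed.

Lemma forall_nth_rcons (T : eqType) (x0 : T) (P : T -> seq T -> bool) s a :
  [forall k : 'I_(size (rcons s a)), P (nth x0 (rcons s a) k) (take k (rcons s a))] =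
  [forall k : 'I_(size s), P (nth x0 s k) (take k s)] && P a s.
Proof.
rewrite !(forall_iota _ (fun k => P (nth x0 _ k) (take k _))) size_rcons -addn1 iotaD all_cat.
have -> : iota (0 + size s) 1 = [:: size s] by [].
rewrite [all _ [:: _]]/= nth_rcons ltnn eqxx -cats1 take_size_cat // andbT.
congr (_ && _).
apply: eq_in_all => k; rewrite mem_iota add0n => /andP[_ lt].
by rewrite cats1 nth_rcons lt -cats1 takel_cat // ltnW.
Qed.

Definition Qr (t : seq step) := count_mem sD t <= count_mem sU t.
Definition Pr (b : step) (t : seq step) := (b == sF) ==> (count_mem sD t < count_mem sU t).
Definition rpre (s : seq step) :=
  [forall k : 'I_(size s).+1, Qr (take k s)] &&
  [forall k : 'I_(size s), Pr (nth sU s k) (take k s)].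

Lemma riordanE s : riordan_path s =
  [&& [forall k : 'I_(size s).+1, Qr (take k s)], count_mem sU s == count_mem sD s &
      [forall k : 'I_(size s), Pr (nth sU s k) (take k s)]].
Proof. by []. Qed.

Lemma rpre_rcons s a : rpre (rcons s a) = [&& rpre s, Qr (rcons s a) & Pr a s].
Proof.
rewrite /rpre forall_take_rcons (forall_nth_rcons sU Pr).
by case: [forall k : 'I_(size s).+1, _]; case: [forall k : 'I_(size s), _]; case: (Qr _); case: (Pr _ _).
Qed.

Lemma rpre_Q s : rpre s -> Qr s.
Proof. by move=> /andP[/forallP /(_ ord_max) /=]; rewrite take_size. Qed.

Definition Gs n (f : nat -> nat) :=
  \sum_(p : n.-tuple step) rpre p * f (count_mem sU p - count_mem sD p).

Lemma Gs_step n f : Gs n.+1 f = Gs n (TRf f).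
Proof.
rewrite /Gs (sum_rcons _ (fun s => rpre s * f (count_mem sU s - count_mem sD s))).
apply: eq_bigr => w _.
rewrite sum_step !rpre_rcons.
case Hb: (rpre w); last by rewrite !andFb !mul0n.
rewrite !andTb; change (nat_of_bool true) with 1; rewrite mul1n.
have e1 : (sU == sF) = false by [].
have e2 : (sU == sD) = false by [].
have e3 : (sF == sU) = false by [].
have e4 : (sF == sD) = false by [].
have e5 : (sD == sU) = false by [].
have e6 : (sD == sF) = false by [].
have := rpre_Q Hb; rewrite /Qr /Pr /TRf !count_rcons' !eqxx e1 e2 e3 e4 e5 e6 /=.
change (nat_of_bool true) with 1; change (nat_of_bool false) with 0; rewrite !addn0.
set u := count_mem sU w; set d := count_mem sD w.
move=> du.
have -> : (d <= u + 1) = true by lia.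
rewrite du /=.
have -> : u + 1 - d = (u - d).+1 by lia.
have -> : u - (d + 1) = (u - d).-1 by lia.
have -> : (d + 1 <= u) = (0 < u - d) by lia.
have -> : (d < u) = (0 < u - d) by lia.
case: (u - d) => [|h] /=; rewrite ?mul0n ?mul1n ?addn0 //.
lia.
Qed.

Lemma Fs0 g : Fs 0 g = g 0 0.
Proof.
rewrite /Fs (sum_tuple0 (fun s => ballot s * g (st1 s) (st2 s))).
have -> : ballot [::] = true by apply/forallP => k.
by rewrite mul1n.
Qed.

Lemma Gs0 f : Gs 0 f = f 0.
Proof.
rewrite /Gs (sum_tuple0 (fun s => rpre s * f (count_mem sU s - count_mem sD s))).
have -> : rpre [::] = true.
  by apply/andP; split; apply/forallP => -[[|k] //].
by rewrite mul1n.
Qed.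

Lemma LamD0 x y : Lam (fun h => (h == 0 : nat)) x y = c x y 0.
Proof.
rewrite /Lam addn1 big_ord_recl /= muln1 big1 ?addn0 // => i _.
by rewrite muln0.
Qed.

Lemma FG n f : Fs n (Lam f) = Gs n f.
Proof.
elim: n f => [|n IH] f.
- rewrite Fs0 Gs0 /Lam addn1 big_ord_recl big_ord0 addn0 c0 /=.
  by rewrite mul1n.
- rewrite Fs_step Gs_step -IH /Fs; apply: eq_bigr => w _.
  by rewrite intertwine.
Qed.

Theorem theorem4p3 (n : nat) : 1 <= n -> num_ballot_matching n = R n.
Proof.
move=> _.
have -> : num_ballot_matching n = Fs n (Lam (fun h => (h == 0 : nat))).
  rewrite /num_ballot_matching /Fs -sum1_card big_mkcond.
  apply: eq_bigr => w _; rewrite inE.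
  case Hb: (ballot w) => /=; last by rewrite mul0n.
  rewrite mul1n LamD0 c0 /st1 /st2 /matching_parity.
  have := ballot_Q Hb; rewrite /Qb => /andP[ba cb].
  rewrite !oddB //.
  by case: (odd (count_mem cA w)); case: (odd (count_mem cB w));
     case: (odd (count_mem cC w)).
rewrite FG /R -sum1_card big_mkcond /Gs.
apply: eq_bigr => p _; rewrite inE riordanE.
case Hb: (rpre p); move: Hb; rewrite /rpre.
- move=> /andP[h1 h2]; rewrite h1 h2 andbT /= mul1n.
  move: h1 => /forallP /(_ ord_max) /=; rewrite take_size /Qr => du.
  rewrite subn_eq0 eqn_leq du andbT.
  by case: (_ <= _).
- by case: [forall k : 'I_(size p).+1, _]; case: [forall k : 'I_(size p), _] => //;
     rewrite ?andbF ?mul0n.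
Qed.
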